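(* Let $0\le r\le n$. For each $0\le j\le r$, the operator $K_{rj}$ has order $r$, degree $-j$ and deficiency $r$ relative to $\mathcal P_n$. Conversely, if $L$ is a linear differential operator with polynomial coefficients of order $r$ and deficiency $r$ relative to $\mathcal P_n$ which has a degree $d$, then $d=-j$ for some $0\le j\le r$ and $L=a\,K_{rj}$ for some nonzero real constant $a$.
   Context: $D=d/dx$. For $s\ge0$, $\mathcal P_s$ is the space of real polynomials in $x$ of degree at most $s$, and $\mathcal P_s=\{0\}$ for $s<0$. A linear differential operator with polynomial coefficients is $L=\sum_{i=0}^r a_i(x)D^i$ with $a_i\in\mathbb R[x]$; its order is the largest $i$ with $a_i\ne0$. $L$ has degree $d\in\mathbb Z$ if there are real numbers $c_j$, not all zero, with $L[x^j]=c_jx^{j+d}$ for all $j\in\mathbb N$. $L$ has deficiency $m$ relative to $\mathcal P_n$ if $L(\mathcal P_n)\subset\mathcal P_{n-m}$ but $L(\mathcal P_n)\not\subset\mathcal P_{n-m-1}$. Pochhammer operator: $(a-xD)_k=(-1)^k(xD-a)(xD-(a-1))\cdots(xD-(a-k+1))$. For $0\le j\le r\le n$, $K_{rj}=\frac{1}{(r-j)!}(n-j-xD)_{r-j}D^j$. *)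

(* Defs.v *)
(* Differential operators with polynomial coefficients
   L = sum_i a_i(x) D^i are represented by their coefficient list,
   i.e. as elements of {poly {poly R}}: the outer variable stands for D,
   the coefficient of D^i is a_i(x) : {poly R}. *)
From HB Require Import structures.
From mathcomp Require Import all_boot all_order all_algebra.
From mathcomp Require Import reals.
Set Implicit Arguments. Unset Strict Implicit. Unset Printing Implicit Defensive.
Import Order.TTheory GRing.Theory Num.Theory.
Local Open Scope ring_scope.

Section DiffOps.
Variable R : realType.

Definition diffop := {poly {poly R}}.

Definition applyop (L : diffop) (p : {poly R}) : {poly R} :=
  \sum_(i < size L) L`_i * p^`(i).

(* Composition A o B, computed with the Leibniz rule
   D^i o b = sum_{l<=i} C(i,l) b^(l) D^(i-l). *)
Definition opmul (A B : diffop) : diffop :=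
  \sum_(i < size A) \sum_(l < i.+1) \sum_(k < size B)
     ((A`_i * ('C(i, l))%:R%:P * (B`_k)^`(l)) *: ('X^(i - l + k) : diffop)).

Definition xD : diffop := ('X : {poly R}) *: ('X : diffop).
Definition cst (c : R) : diffop := c%:P%:P.
Definition Dpow (j : nat) : diffop := 'X^j.

Fixpoint pochprod (a : R) (k : nat) : diffop :=
  match k with
  | 0 => 1
  | k'.+1 => opmul (pochprod a k') (xD - cst (a - k'%:R))
  end.

(* Pochhammer operator (a - xD)_k *)
Definition poch (a : R) (k : nat) : diffop := cst ((-1) ^+ k) * pochprod a k.

Definition Kop (n r j : nat) : diffop :=
  opmul (cst ((r - j)`!%:R)^-1 * poch (n%:R - j%:R) (r - j)) (Dpow j).

Definition has_order (L : diffop) (r : nat) : Prop :=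
  L`_r != 0 /\ forall i, (r < i)%N -> L`_i = 0.

(* degree d : L[x^j] = c_j x^(j+d) for all j, c not identically zero
   (when j + d < 0, the monomial x^(j+d) is not a polynomial, so c_j = 0) *)
Definition has_degree (L : diffop) (d : int) : Prop :=
  exists c : nat -> R, (exists j, c j != 0) /\
    forall j : nat, ((j%:Z + d < 0)%R -> c j = 0) /\
      applyop L 'X^j = c j *: 'X^(absz (j%:Z + d)).

Definition inP (s : int) (p : {poly R}) : Prop :=
  if (s < 0)%R then p = 0 else (size p <= (absz s).+1)%N.

Definition has_deficiency (L : diffop) (n : nat) (m : int) : Prop :=
  (forall p : {poly R}, (size p <= n.+1)%N -> inP (n%:Z - m) (applyop L p)) /\
  ~ (forall p : {poly R}, (size p <= n.+1)%N -> inP (n%:Z - m - 1) (applyop L p)).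

End DiffOps.

(* Main.v *)
Require Import Defs.
From HB Require Import structures.
From mathcomp Require Import all_boot all_order all_algebra.
From mathcomp Require Import reals.
From mathcomp Require Import zify ring lra.
Import Order.TTheory GRing.Theory Num.Theory.
Local Open Scope ring_scope.



Section Ops.
Variable R : realType.
Local Notation dop := {poly {poly R}}.
Implicit Types (L M A B : dop) (p q : {poly R}).

Lemma size_sum_le (I : Type) (s : seq I) (P : pred I) (F : I -> {poly R}) k :
  (forall i, P i -> (size (F i) <= k)%N) -> (size (\sum_(i <- s | P i) F i)%R <= k)%N.
Proof.
move=> h; apply: (big_ind (fun q => (size q <= k)%N)) => //.
- by rewrite size_poly0.
- by move=> x y hx hy; apply: leq_trans (size_polyD _ _) _; rewrite geq_max hx hy.
Qed.

Lemma size_sum_le2 (I : Type) (s : seq I) (P : pred I) (F : I -> dop) k :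
  (forall i, P i -> (size (F i) <= k)%N) -> (size (\sum_(i <- s | P i) F i)%R <= k)%N.
Proof.
move=> h; apply: (big_ind (fun q : dop => (size q <= k)%N)) => //.
- by rewrite size_poly0.
- by move=> x y hx hy; apply: leq_trans (size_polyD _ _) _; rewrite geq_max hx hy.
Qed.

Lemma applyopE L p N : (size L <= N)%N ->
  applyop L p = \sum_(i < N) L`_i * p^`(i).
Proof.
move=> hN; rewrite /applyop (big_ord_widen _ (fun i => L`_i * p^`(i)) hN).
rewrite big_mkcond /=; apply: eq_bigr => i _.
by case: ifP => // /negbT; rewrite -leqNgt => h; rewrite nth_default // mul0r.
Qed.

Lemma applyop0 p : applyop 0 p = 0.
Proof. by rewrite /applyop size_poly0 big_ord0. Qed.

Lemma applyopD L M p : applyop (L + M) p = applyop L p + applyop M p.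
Proof.
set N := maxn (size L) (size M).
rewrite !(applyopE _ _ N) ?leq_maxl ?leq_maxr ?size_polyD //.
by rewrite -big_split; apply: eq_bigr => i _; rewrite coefD mulrDl.
Qed.

Lemma applyopN L p : applyop (- L) p = - applyop L p.
Proof.
rewrite !(applyopE _ _ (size L)) ?size_polyN //.
by rewrite -sumrN; apply: eq_bigr => i _; rewrite coefN mulNr.
Qed.

Lemma applyopB L M p : applyop (L - M) p = applyop L p - applyop M p.
Proof. by rewrite applyopD applyopN. Qed.

Lemma applyopZ (c : R) L p : applyop (c%:P *: L) p = c *: applyop L p.
Proof.
rewrite !(applyopE _ _ (size L)) ?size_scale_leq //.
rewrite scaler_sumr; apply: eq_bigr => i _.
by rewrite coefZ mul_polyC scalerAl.
Qed.

Lemma applyop_sum (I : Type) (s : seq I) (P : pred I) (F : I -> dop) p :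
  applyop (\sum_(i <- s | P i) F i) p = \sum_(i <- s | P i) applyop (F i) p.
Proof.
apply: (big_morph (fun L => applyop L p)); first by move=> x y; apply: applyopD.
exact: applyop0.
Qed.

Lemma applyopXn (c : {poly R}) N p : applyop (c *: 'X^N) p = c * p^`(N).
Proof.
rewrite (applyopE _ _ N.+1); last by apply: leq_trans (size_scale_leq _ _) _; rewrite size_polyXn.
rewrite big_ord_recr /= big1 ?add0r.
  by rewrite coefZ coefXn eqxx mulr1.
move=> i _; rewrite coefZ coefXn.
by rewrite (_ : (i == N :> nat) = false) ?mulr0 ?mul0r //; apply/negbTE; rewrite neq_ltn ltn_ord.
Qed.

Lemma applyop_addp L p q : applyop L (p + q) = applyop L p + applyop L q.
Proof. by rewrite /applyop -big_split; apply: eq_bigr => i _; rewrite raddfD mulrDr. Qed.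

Lemma applyop_scalep L (a : R) p : applyop L (a *: p) = a *: applyop L p.
Proof.
rewrite /applyop scaler_sumr; apply: eq_bigr => i _.
by rewrite linearZ /= scalerAr.
Qed.

Lemma applyop_0p L : applyop L 0 = 0.
Proof. by rewrite /applyop big1 // => i _; rewrite raddf0 mulr0. Qed.

Lemma applyop_sump L (I : Type) (s : seq I) (P : pred I) (F : I -> {poly R}) :
  applyop L (\sum_(i <- s | P i) F i) = \sum_(i <- s | P i) applyop L (F i).
Proof.
apply: (big_morph (applyop L)); first by move=> x y; apply: applyop_addp.
exact: applyop_0p.
Qed.

Lemma applyop_natp L (k : nat) p : applyop L (p *+ k) = applyop L p *+ k.
Proof. by rewrite -!scaler_nat applyop_scalep. Qed.

End Ops.



Section Ops2.
Variable R : realType.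
Local Notation dop := {poly {poly R}}.
Implicit Types (L M A B : dop) (p q : {poly R}).
Local Arguments derivn : simpl never.

Lemma derivnn m n p : p^`(m)^`(n) = p^`(n + m).
Proof. by rewrite /derivn iterD. Qed.

Lemma shiftT n p q : \sum_(l < n.+1) p^`(l) * q^`((n - l).+1) *+ 'C(n, l) =
  p * q^`(n.+1) + \sum_(l < n.+1) p^`(l.+1) * q^`(n - l) *+ 'C(n, l.+1).
Proof.
rewrite big_ord_recl derivn0 subn0 bin0 mulr1n; congr (_ + _).
rewrite [RHS]big_ord_recr /= bin_small // mulr0n addr0.
apply: eq_bigr => i _; rewrite /bump /=.
by rewrite subnSK // ltn_ord.
Qed.

Lemma derivnM n p q :
  (p * q)^`(n) = \sum_(l < n.+1) (p^`(l) * q^`(n - l)) *+ 'C(n, l).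
Proof.
elim: n => [|n IH].
  by rewrite big_ord1 /= bin0 mulr1n.
rewrite derivnS IH raddf_sum /=.
under eq_bigr => l _ do rewrite derivMn derivM -!derivnS mulrnDl.
rewrite big_split /= shiftT [RHS]big_ord_recl derivn0 subn0 bin0 mulr1n.
under [X in _ = _ + X]eq_bigr => l _ do rewrite binS mulrnDr subSS.
rewrite big_split /=.
rewrite /bump.
under [X in _ = _ + (X + _)]eq_bigr => i _ do rewrite leq0n add1n.
under [X in _ = _ + (_ + X)]eq_bigr => i _ do rewrite leq0n add1n.
ring.
Qed.

Lemma applyop_mul A B p : applyop (opmul A B) p = applyop A (applyop B p).
Proof.
rewrite /opmul applyop_sum.
rewrite {2}/applyop; apply: eq_bigr => i _.
rewrite applyop_sum /applyop raddf_sum /= mulr_sumr.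
under [RHS]eq_bigr => k _ do rewrite derivnM mulr_sumr.
rewrite (exchange_big_dep predT) //=.
apply: eq_bigr => l _; rewrite -/(applyop _ _) applyop_sum; apply: eq_bigr => k _.
rewrite applyopXn derivnn polyC_natr -mulr_natr.
ring.
Qed.

End Ops2.



Section Ops3.
Variable R : realType.
Local Notation dop := {poly {poly R}}.
Implicit Types (L M A B : dop) (p q : {poly R}).
Local Arguments derivn : simpl never.

Definition ff (i : nat) : {poly R} := \prod_(t < i) ('X - (t%:R)%:P).

Lemma ff_eval i m : (ff i).[m%:R] = (m ^_ i)%:R.
Proof.
elim: i => [|i IH]; first by rewrite /ff big_ord0 hornerC ffactn0.
rewrite /ff big_ord_recr /= hornerM -/(ff i) IH hornerXsubC ffactnSr natrM.
case: (leqP i m) => h; first by rewrite natrB.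
by rewrite (ffact_small h) ?mul0n !mul0r.
Qed.

Lemma size_ff i : (size (ff i) <= i.+1)%N.
Proof.
elim: i => [|i IH]; first by rewrite /ff big_ord0 size_poly1.
rewrite /ff big_ord_recr /= -/(ff i); apply: leq_trans (size_polyMleq _ _) _.
rewrite size_XsubC addn2 /=; exact: IH.
Qed.

Lemma applyop1 p : applyop (1 : dop) p = p.
Proof.
have -> : (1 : dop) = 1 *: 'X^0 by rewrite expr0 scale1r.
by rewrite applyopXn mul1r.
Qed.

Lemma applyop_xD m : applyop (xD R) 'X^m = m%:R *: 'X^m.
Proof.
rewrite /xD -[X in _ *: X]expr1 applyopXn derivn1 derivXn.
case: m => [|m]; first by rewrite mulr0n mulr0 scale0r.
by rewrite -scaler_nat -scalerAr -exprS.
Qed.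

Lemma applyop_cst c p : applyop (cst c) p = c *: p.
Proof.
have -> : cst c = c%:P *: 'X^0 by rewrite expr0 -mul_polyC mulr1.
by rewrite applyopXn mul_polyC.
Qed.

Lemma applyop_cstmul c L p : applyop (cst c * L) p = c *: applyop L p.
Proof. by rewrite /cst mul_polyC applyopZ. Qed.

Lemma applyop_Dpow j p : applyop (Dpow R j) p = p^`(j).
Proof. by rewrite /Dpow -[X in applyop X]scale1r applyopXn mul1r. Qed.

Lemma applyop_pochprod a k s : applyop (@pochprod R a k) 'X^s =
  (\prod_(t < k) (s%:R - (a - t%:R))) *: 'X^s.
Proof.
elim: k => [|k IH]; first by rewrite /= applyop1 big_ord0 scale1r.
rewrite /= applyop_mul applyopB applyop_xD applyop_cst -scalerBl applyop_scalep IH.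
by rewrite scalerA big_ord_recr /= mulrC.
Qed.

Lemma applyop_poch a k s : applyop (@poch R a k) 'X^s =
  ((-1) ^+ k * \prod_(t < k) (s%:R - (a - t%:R))) *: 'X^s.
Proof. by rewrite /poch applyop_cstmul applyop_pochprod scalerA. Qed.

Definition Kp (n r j : nat) : {poly R} :=
  (((r - j)`!%:R)^-1 * (-1) ^+ (r - j)) *:
     (ff j * \prod_(t < r - j) ('X - (n%:R - t%:R)%:P)).

Lemma Kp_eval n r j m : (Kp n r j).[m%:R] =
  ((r - j)`!%:R)^-1 * (-1) ^+ (r - j) * (m ^_ j)%:R *
     \prod_(t < r - j) (m%:R - (n%:R - t%:R)).
Proof.
rewrite /Kp hornerZ hornerM ff_eval horner_prod mulrA.
by under eq_bigr => t _ do rewrite hornerXsubC.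
Qed.

Lemma Kop_act n r j m : applyop (Kop R n r j) 'X^m = (Kp n r j).[m%:R] *: 'X^(m - j).
Proof.
rewrite /Kop applyop_mul applyop_Dpow derivnXn applyop_natp applyop_cstmul.
rewrite applyop_poch -scaler_nat !scalerA Kp_eval; congr (_ *: _).
case: (leqP j m) => h.
  have E : \prod_(t < r - j) ((m - j)%:R - (n%:R - j%:R - t%:R)) =
           \prod_(t < r - j) (m%:R - (n%:R - t%:R) : R).
    by apply: eq_bigr => t _; rewrite natrB //; ring.
  rewrite E; ring.
by rewrite (ffact_small h); ring.
Qed.

End Ops3.



Section Ops4.
Variable R : realType.
Local Notation dop := {poly {poly R}}.
Implicit Types (L M A B : dop) (p q : {poly R}).

Lemma size_opmul A B : (size (opmul A B) <= (size A + size B).-1)%N.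
Proof.
rewrite /opmul; apply: size_sum_le2 => i _; apply: size_sum_le2 => l _.
apply: size_sum_le2 => k _.
apply: leq_trans (size_scale_leq _ _) _; rewrite size_polyXn.
have := ltn_ord i; have := ltn_ord k; have := ltn_ord l; lia.
Qed.

Lemma size_cstmul (c : R) L : (size (cst c * L)%R <= size L)%N.
Proof. by rewrite /cst mul_polyC size_scale_leq. Qed.

Lemma size_xDc (c : R) : (size (xD R - cst c)%R <= 2)%N.
Proof.
apply: leq_trans (size_polyD _ _) _; rewrite geq_max size_polyN.
rewrite (leq_trans (size_polyC_leq1 _)) // andbT.
by rewrite /xD (leq_trans (size_scale_leq _ _)) // size_polyX.
Qed.

Lemma size_pochprod (a : R) k : (size (pochprod a k) <= k.+1)%N.
Proof.
elim: k => [|k IH]; first by rewrite /= size_poly1.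
rewrite /=; apply: leq_trans (size_opmul _ _) _.
have := size_xDc (a - k%:R); lia.
Qed.

Lemma size_Kop n r j : (j <= r)%N -> (size (Kop R n r j) <= r.+1)%N.
Proof.
move=> hj; rewrite /Kop; apply: leq_trans (size_opmul _ _) _.
rewrite /Dpow size_polyXn.
have := size_cstmul ((r - j)`!%:R)^-1 (poch (n%:R - j%:R) (r - j)).
have : (size (@poch R (n%:R - j%:R) (r - j)) <= (r - j).+1)%N.
  by rewrite /poch (leq_trans (size_cstmul _ _)) // size_pochprod.
lia.
Qed.

End Ops4.



Section Ops5.
Variable R : realType.
Local Notation dop := {poly {poly R}}.
Implicit Types (L M A B : dop) (p q : {poly R}).

Definition beta L (d : int) (i : nat) : R :=
  if (0 <= i%:Z + d) then (L`_i)`_(absz (i%:Z + d)) else 0.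
Definition Qp L r d : {poly R} := \sum_(i < r.+1) beta L d i *: ff R i.

Lemma symbolP L r d (c : nat -> R) : (size L <= r.+1)%N ->
  (forall m, ((m%:Z + d < 0) -> c m = 0) /\
     applyop L 'X^m = c m *: 'X^(absz (m%:Z + d))) ->
  forall m, c m = (Qp L r d).[m%:R].
Proof.
move=> hs hc m; have [h1 h2] := hc m.
rewrite /Qp horner_sum.
under eq_bigr => i _ do rewrite hornerZ ff_eval.
case: (boolP (m%:Z + d < 0)) => hmd.
  rewrite h1 //; symmetry; apply: big1 => i _.
  rewrite /beta; case: ifP => h; last by rewrite mul0r.
  by rewrite ffact_small ?mulr0 //; lia.
have E : (applyop L 'X^m)`_(absz (m%:Z + d)) = c m.
  by rewrite h2 coefZ coefXn eqxx mulr1.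
rewrite -E (applyopE _ _ _ r.+1 hs) coef_sum; apply: eq_bigr => i _.
rewrite derivnXn [in LHS]mulrnAr coefMn coefMXn mulr_natr.
case: (leqP i m) => him; last by rewrite ffact_small // !mulr0n.
rewrite /beta; case: (boolP (0 <= i%:Z + d)) => hb.
  rewrite ifF; last by apply/negbTE; lia.
  congr (_ *+ _); congr (_`_ _); lia.
rewrite ifT ?mul0rn //; lia.
Qed.

Lemma size_Qp L r d : (size (Qp L r d) <= r.+1)%N.
Proof.
rewrite /Qp; apply: size_sum_le => i _.
apply: leq_trans (size_scale_leq _ _) _; apply: leq_trans (size_ff _ _) _.
by rewrite ltnS -ltnS ltn_ord.
Qed.

Lemma size_Qp_lt L r d : L`_r = 0 -> (size (Qp L r d) <= r)%N.
Proof.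
move=> h; rewrite /Qp big_ord_recr /= {2}/beta h coef0 if_same scale0r addr0.
apply: size_sum_le => i _.
apply: leq_trans (size_scale_leq _ _) _; apply: leq_trans (size_ff _ _) _.
exact: ltn_ord.
Qed.

End Ops5.



Section Ops6.
Variable R : realType.
Local Notation dop := {poly {poly R}}.
Implicit Types (L M A B : dop) (p q : {poly R}).

Lemma natr_inj : injective (fun m : nat => m%:R : R).
Proof. by move=> a b /eqP; rewrite eqr_nat => /eqP. Qed.

Lemma natrB' (a b : nat) : (b <= a)%N -> (a%:R - b%:R : R) = (a - b)%:R.
Proof. by move=> h; rewrite natrB. Qed.

Variables (n r j : nat).
Hypotheses (hjr : (j <= r)%N) (hrn : (r <= n)%N).

Lemma Kp_root1 m : (m < j)%N -> (Kp R n r j).[m%:R] = 0.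
Proof. by move=> h; rewrite Kp_eval ffact_small // mulr0 mul0r. Qed.

Lemma Kp_root2 m : (n - r + j < m)%N -> (m <= n)%N -> (Kp R n r j).[m%:R] = 0.
Proof.
move=> h1 h2; rewrite Kp_eval.
have ht : (n - m < r - j)%N by lia.
rewrite (bigD1 (Ordinal ht)) //= natrB' ?subKn ?subrr ?mul0r ?mulr0 //; lia.
Qed.

Lemma Kp_nz : (Kp R n r j).[(n - r + j)%:R] != 0.
Proof.
rewrite Kp_eval !mulf_neq0 //.
- by rewrite invr_eq0 pnatr_eq0 -lt0n fact_gt0.
- by rewrite signr_eq0.
- by rewrite pnatr_eq0 -lt0n ffact_gt0; lia.
apply/prodf_neq0 => t _.
rewrite natrB' //; last by have := ltn_ord t; lia.
rewrite subr_eq0 eqr_nat; have := ltn_ord t; lia.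
Qed.

Definition Sroots : seq nat := iota 0 j ++ iota (n - r + j).+1 (r - j).

Lemma Sroots_uniq : uniq (map (fun m : nat => m%:R : R) Sroots).
Proof.
rewrite (map_inj_uniq natr_inj) cat_uniq !iota_uniq andbT /=.
apply/hasPn => x; rewrite /= !mem_iota => hx; lia.
Qed.

Lemma Sroots_size : size (map (fun m : nat => m%:R : R) Sroots) = r.
Proof. rewrite size_map size_cat !size_iota; lia. Qed.

Lemma Sroots_mem m : m \in Sroots -> (m < j)%N \/ ((n - r + j < m)%N /\ (m <= n)%N).
Proof. rewrite mem_cat !mem_iota => /orP[]; lia. Qed.

Lemma x0_notin : (n - r + j)%:R \notin map (fun m : nat => m%:R : R) Sroots.
Proof.
rewrite (mem_map natr_inj); apply/negP => /Sroots_mem; lia.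
Qed.

Lemma Kp_roots : all (root (Kp R n r j)) (map (fun m : nat => m%:R : R) Sroots).
Proof.
apply/allP => x /mapP [m /Sroots_mem hm ->]; apply/rootP.
by case: hm => [h|[h1 h2]]; [apply: Kp_root1 | apply: Kp_root2].
Qed.

Lemma size_Kp : (size (Kp R n r j) <= r.+1)%N.
Proof.
rewrite /Kp; apply: leq_trans (size_scale_leq _ _) _.
apply: leq_trans (size_polyMleq _ _) _.
rewrite /ff !size_prod_XsubC ![index_enum _]unlock -!enumT -!cardT !card_ord.
lia.
Qed.

Lemma eq_by_roots (P : {poly R}) : (size P <= r.+1)%N ->
  all (root P) (map (fun m : nat => m%:R : R) Sroots) ->
  P = (P.[(n - r + j)%:R] / (Kp R n r j).[(n - r + j)%:R]) *: Kp R n r j.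
Proof.
move=> hs hr; set a := _ / _.
apply/eqP; rewrite -subr_eq0; apply/eqP.
apply: (@roots_geq_poly_eq0 _ _ ((n - r + j)%:R :: map (fun m : nat => m%:R : R) Sroots)).
- rewrite /= {1}/root hornerD hornerN hornerZ /a -mulrA mulVf ?Kp_nz // mulr1 subrr eqxx /=.
  apply/allP => x hx; move/allP: hr => /(_ x hx) /rootP h1.
  move/allP: Kp_roots => /(_ x hx) /rootP h2.
  by rewrite /root hornerD hornerN hornerZ h1 h2 mulr0 subrr.
- by rewrite /= x0_notin Sroots_uniq.
- rewrite /= Sroots_size; apply: leq_trans (size_polyD _ _) _.
  by rewrite size_polyN geq_max hs (leq_trans (size_scale_leq _ _)) // size_Kp.
Qed.

Lemma zero_by_roots (P : {poly R}) : (size P <= r)%N ->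
  all (root P) (map (fun m : nat => m%:R : R) Sroots) -> P = 0.
Proof.
move=> hs hr; apply: roots_geq_poly_eq0 hr Sroots_uniq _.
by rewrite Sroots_size.
Qed.

End Ops6.

Lemma poly_eq_nat (R : realType) (P Q : {poly R}) :
  (forall m : nat, P.[m%:R] = Q.[m%:R]) -> P = Q.
Proof.
move=> h; apply/eqP; rewrite -subr_eq0; apply/eqP.
apply: (@roots_geq_poly_eq0 _ _ (map (fun m : nat => m%:R : R) (iota 0 (size (P - Q))))).
- by apply/allP => x /mapP [m _ ->]; rewrite /root hornerD hornerN h subrr.
- by rewrite (map_inj_uniq (@natr_inj R)) iota_uniq.
- by rewrite size_map size_iota.
Qed.



Lemma op_inj (R : realType) (L M : diffop R) :
  (forall m, applyop L 'X^m = applyop M 'X^m) -> L = M.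
Proof.
move=> h; apply/eqP; rewrite -subr_eq0; apply/eqP.
set N := L - M.
have hN : forall m, applyop N 'X^m = 0 by move=> m; rewrite applyopB h subrr.
apply/polyP => i; rewrite coef0.
elim/ltn_ind: i => i IH.
have := hN i; rewrite (applyopE _ _ _ (size N + i.+1)) ?leq_addr //.
have hi : (i < size N + i.+1)%N by rewrite addnS ltnS leq_addl.
rewrite (bigD1 (Ordinal hi)) //= big1 ?addr0; last first.
  move=> k hk; rewrite derivnXn; case: (ltnP k i) => hki.
    by rewrite IH // mul0r.
  have hik : (i < k)%N by rewrite ltn_neqAle eq_sym hki andbT; move: hk; rewrite -val_eqE.
  by rewrite ffact_small // mulr0n mulr0.
rewrite derivnXn subnn ffactnn expr0 mulrnAr mulr1 => h0.
apply/polyP => t; have := congr1 (fun p : {poly R} => p`_t) h0.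
rewrite coefMn !coef0 => /eqP; rewrite mulrn_eq0 => /orP[|/eqP //].
by rewrite (negbTE (lt0n_neq0 (fact_gt0 i))).
Qed.

Theorem mainTheorem13 (R : realType) (n r : nat) (hrn : (r <= n)%N) :
  (forall j : nat, (j <= r)%N ->
     has_order (Kop R n r j) r /\
     has_degree (Kop R n r j) (- (j%:Z)) /\
     has_deficiency (Kop R n r j) n r%:Z) /\
  (forall (L : diffop R) (d : int),
     has_order L r -> has_deficiency L n r%:Z -> has_degree L d ->
     exists j : nat, (j <= r)%N /\ d = - (j%:Z) /\
       exists a : R, a != 0 /\ L = a%:P *: Kop R n r j).
Proof.
split.
- move=> j hj.
  have hdeg : forall m : nat, ((m%:Z + - j%:Z < 0) -> (Kp R n r j).[m%:R] = 0) /\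
      applyop (Kop R n r j) 'X^m = (Kp R n r j).[m%:R] *: 'X^(absz (m%:Z + - j%:Z)).
    move=> m; split; first by move=> h; apply: Kp_root1; lia.
    rewrite Kop_act; case: (leqP j m) => h.
      by congr (_ *: 'X^_); lia.
    by rewrite Kp_root1 // !scale0r.
  have hsK := size_Kop R n r j hj.
  split; [|split].
  + split.
      apply/eqP => hKr.
      have hQ := symbolP _ _ _ _ _ hsK hdeg.
      have E : Kp R n r j = Qp R (Kop R n r j) r (- j%:Z) by apply: poly_eq_nat.
      have := Kp_nz R n r j hj hrn; rewrite E.
      rewrite (zero_by_roots _ _ _ _ hj hrn _ (size_Qp_lt _ _ _ _ hKr)) ?horner0 ?eqxx //.
      by rewrite -E; apply: Kp_roots.
    move=> i hi; apply: nth_default; exact: leq_trans hsK hi.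
  + exists (fun m => (Kp R n r j).[m%:R]); split; last exact: hdeg.
    by exists (n - r + j)%N; apply: Kp_nz.
  + split.
      move=> p hp; rewrite /inP ifF; last by apply/negbTE; lia.
      rewrite -(coefK p) poly_def applyop_sump; apply: size_sum_le => m _.
      rewrite applyop_scalep Kop_act; apply: leq_trans (size_scale_leq _ _) _.
      case: (eqVneq (Kp R n r j).[m%:R] 0) => hz; first by rewrite hz scale0r size_poly0.
      apply: leq_trans (size_scale_leq _ _) _; rewrite size_polyXn.
      have hm : (m <= n)%N by have := ltn_ord m; lia.
      have : ~~ (n - r + j < m)%N.
        by apply/negP => hlt; move/eqP: hz; apply; apply: Kp_root2.
      lia.
    move=> H.
    have hsz : (size ('X^(n - r + j) : {poly R}) <= n.+1)%N by rewrite size_polyXn; lia.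
    move: (H _ hsz); rewrite Kop_act.
    have -> : (n - r + j - j = n - r)%N by lia.
    rewrite /inP; case: ifP => h.
      move/eqP; rewrite scaler_eq0 (negbTE (Kp_nz R n r j hj hrn)) /=.
      by rewrite -size_poly_eq0 size_polyXn.
    rewrite size_scale ?Kp_nz // size_polyXn; move/negbT: h; lia.
- move=> L d [hLr hLo] [hd1 hd2] [c [[j0 hj0] hc]].
  have hs : (size L <= r.+1)%N by apply/leq_sizeP => i hi; apply: hLo.
  have hQ := symbolP _ _ _ _ _ hs hc.
  set Q := Qp R L r d in hQ.
  have Qnz : Q != 0.
    by apply/eqP => Q0; move: hj0; rewrite hQ Q0 horner0 eqxx.
  have hroot : forall m : nat, (m <= n)%N -> (n%:Z - r%:Z < m%:Z + d) -> c m = 0.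
    move=> m hm hlt.
    case: (boolP (m%:Z + d < 0)) => hneg; first by apply: (hc m).1.
    have := hd1 ('X^m); rewrite size_polyXn ltnS => /(_ hm).
    rewrite /inP ifF; last by apply/negbTE; lia.
    have [_ ->] := hc m; case: (eqVneq (c m) 0) => // hcm.
    rewrite size_scale // size_polyXn; lia.
  case: (boolP (0 < d)) => hdpos.
    exfalso; move/negP: Qnz; apply; apply/eqP.
    apply: (@roots_geq_poly_eq0 _ _ (map (fun m : nat => m%:R : R) (iota (n - r) r.+1))).
    - apply/allP => x /mapP [m hm ->]; apply/rootP; rewrite -hQ.
      move: hm; rewrite mem_iota => hm; apply: hroot; lia.
    - by rewrite (map_inj_uniq (@natr_inj R)) iota_uniq.
    - by rewrite size_map size_iota size_Qp.
  set j := absz d.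
  have hdj : d = - j%:Z by rewrite /j; lia.
  have hjr : (j <= r)%N.
    rewrite leqNgt; apply/negP => hrj; move/negP: Qnz; apply; apply/eqP.
    rewrite /Q /Qp big1 // => i _; rewrite /beta ifF ?scale0r //.
    by apply/negbTE; have := ltn_ord i; lia.
  exists j; split => //; split => //.
  have hQroots : all (root Q) (map (fun m : nat => m%:R : R) (Sroots n r j)).
    apply/allP => x /mapP [m hm ->]; apply/rootP; rewrite -hQ.
    case: (Sroots_mem _ _ _ hjr hrn _ hm) => [h|[h1 h2]].
      by apply: (hc m).1; lia.
    by apply: hroot => //; lia.
  have E := eq_by_roots _ _ _ _ hjr hrn _ (size_Qp _ _ _ _) hQroots.
  set a := _ / _ in E.
  exists a; split.
    by apply/eqP => a0; move/negP: Qnz; apply; apply/eqP; rewrite /Q E a0 scale0r.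
  apply: op_inj => m; rewrite applyopZ Kop_act.
  have [_ ->] := hc m; rewrite hQ /Q E hornerZ -scalerA.
  case: (leqP j m) => hm.
    by have -> : `|(m%:Z + d)%R|%N = (m - j)%N by lia.
  by rewrite Kp_root1 // !scale0r scaler0.
Qed.
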